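(* For $1\le i\le n$ and $1\le j\le n-1$ we have $g_jt_i=t_{s_j(i)}g_j$. Consequently $g_jf=(s_j.f)g_j$ for every $f\in R[t_1,\ldots,t_n]$ and $1\le j\le n-1$.
   Context: Standing setup: $R$ is an integral domain, $n\ge 2$, $r\ge 1$, and $q,u_1,\ldots,u_r\in R$ with $q$ invertible in $R$ and $\Delta:=\prod_{1\le j<i\le r}(u_i-u_j)$ invertible in $R$. For $1\le c\le r$ let $F_c(X)\in R[X]$ be the unique polynomial of degree $\le r-1$ with $F_c(u_{c'})=\delta_{c,c'}\Delta$ for all $1\le c'\le r$. The modified Ariki–Koike (Shoji) algebra $\mathcal H_{n,r}=\mathcal H_{n,r}(R,q,u_1,\ldots,u_r)$ is the associative $R$-algebra generated by $t_1,\ldots,t_n,T_1,\ldots,T_{n-1}$ subject to: $(T_i-q)(T_i+q^{-1})=0$; $(t_i-u_1)\cdots(t_i-u_r)=0$; $T_iT_{i+1}T_i=T_{i+1}T_iT_{i+1}$; $T_iT_j=T_jT_i$ for $|i-j|\ge2$; $t_it_j=t_jt_i$; $T_jt_k=t_kT_j$ for $k\ne j,j+1$; and for $2\le j\le n$: $T_{j-1}t_j=t_{j-1}T_{j-1}+\Delta^{-2}\sum_{1\le c_1<c_2\le r}(u_{c_2}-u_{c_1})(q-q^{-1})F_{c_1}(t_{j-1})F_{c_2}(t_j)$ and $T_{j-1}t_{j-1}=t_jT_{j-1}-\Delta^{-2}\sum_{1\le c_1<c_2\le r}(u_{c_2}-u_{c_1})(q-q^{-1})F_{c_1}(t_{j-1})F_{c_2}(t_j)$.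 Write $[1,r]=\{1,\ldots,r\}$; for $\mathbf k=(k_1,\ldots,k_n)\in[1,r]^n$ set $b_{\mathbf k}:=\prod_{i=1}^n\prod_{1\le j\le r,\,j\ne k_i}\frac{t_i-u_j}{u_{k_i}-u_j}$. For $1\le i,j\le n$ let $B'_{i,j}:=-(q-q^{-1})\sum_{\mathbf k\in[1,r]^n,\ k_i<k_j}b_{\mathbf k}$, and for $1\le i\le n-1$ let $g_i:=T_i+B'_{i,i+1}$. $\mathfrak S(n)$ acts on $R[t_1,\ldots,t_n]$ by $R$-algebra automorphisms via $w.t_i=t_{w(i)}$; $s_j=(j\ j+1)$. *)

(* Defs.v *)
From HB Require Import structures.
From mathcomp Require Import all_boot all_order all_algebra all_fingroup.
From mathcomp Require Import mpoly.
Set Implicit Arguments. Unset Strict Implicit. Unset Printing Implicit Defensive.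
Import Order.TTheory GRing.Theory Num.Theory.
Local Open Scope ring_scope.

(* Conventions: indices are 0-based. The generators t_1..t_n of the paper are
   t 0 .. t (n-1), the generators T_1..T_{n-1} are T 0 .. T (n-2);
   the parameters u_1..u_r are u : 'I_r -> R. *)

Definition Delta (R : idomainType) (r : nat) (u : 'I_r -> R) : R :=
  \prod_(i < r) \prod_(j < r | (j < i)%N) (u i - u j).

Definition swapn (j i : nat) : nat :=
  if i == j then j.+1 else if i == j.+1 then j else i.

(* the defining relations of the modified Ariki-Koike algebra H_{n,r},
   for elements t, T of an R-algebra A *)
Definition AK_relations (R : idomainType) (A : algType R) (n r : nat)
  (q : R) (u : 'I_r -> R) (F : 'I_r -> {poly R}) (t T : nat -> A) : Prop :=
  let D := Delta u in
  let corr j := \sum_(c1 < r) \sum_(c2 < r | (c1 < c2)%N)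
      ((D ^- 2 * (u c2 - u c1) * (q - q^-1)) *:
         (horner_alg (t j) (F c1) * horner_alg (t j.+1) (F c2))) in
  (forall i, (i < n.-1)%N -> (T i - q%:A) * (T i + (q^-1)%:A) = 0) /\
      (forall i, (i < n)%N -> \prod_(c < r) (t i - (u c)%:A) = 0) /\
      (forall i, (i.+1 < n.-1)%N -> T i * T i.+1 * T i = T i.+1 * T i * T i.+1) /\
      (forall i j, (i < n.-1)%N -> (j < n.-1)%N -> (i.+1 < j)%N || (j.+1 < i)%N ->
         T i * T j = T j * T i) /\
      (forall i j, (i < n)%N -> (j < n)%N -> t i * t j = t j * t i) /\
      (forall j k, (j < n.-1)%N -> (k < n)%N -> k != j -> k != j.+1 ->
         T j * t k = t k * T j) /\
      (forall j, (j < n.-1)%N -> T j * t j.+1 = t j * T j + corr j) /\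
      (forall j, (j < n.-1)%N -> T j * t j = t j.+1 * T j - corr j).

Definition bk (R : idomainType) (A : algType R) (n r : nat)
  (u : 'I_r -> R) (t : nat -> A) (k : n.-tuple 'I_r) : A :=
  \prod_(i < n) \prod_(c < r | c != tnth k i)
     ((u (tnth k i) - u c)^-1 *: (t i - (u c)%:A)).

Definition kval (n r : nat) (k : n.-tuple 'I_r) (i : nat) : nat :=
  nth 0%N [seq val x | x <- k] i.

Definition Bprime (R : idomainType) (A : algType R) (n r : nat)
  (q : R) (u : 'I_r -> R) (t : nat -> A) (i j : nat) : A :=
  (- (q - q^-1)) *: \sum_(k : n.-tuple 'I_r | (kval k i < kval k j)%N) bk u t k.

Definition gen_g (R : idomainType) (A : algType R) (n r : nat)
  (q : R) (u : 'I_r -> R) (t T : nat -> A) (j : nat) : A :=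
  T j + Bprime n q u t j j.+1.

Definition evalA (R : idomainType) (A : algType R) (n : nat)
  (x : nat -> A) (f : {mpoly R[n]}) : A :=
  mpoly.mmap (in_alg A) (fun i : 'I_n => x (val i)) f.

(* Main.v *)
Require Import Defs.
From HB Require Import structures.
From mathcomp Require Import all_boot all_order all_algebra all_fingroup.
From mathcomp Require Import mpoly.
From mathcomp Require Import zify ring.
Import Order.TTheory GRing.Theory Num.Theory.
Local Open Scope ring_scope.
Set Implicit Arguments. Unset Strict Implicit. Unset Printing Implicit Defensive.

Lemma arith1 (S m : nat) : (0 < m)%N -> (S <= m.-1 * 2)%N -> (S.+1 - m.-1 <= m)%N.
Proof. case: m => // m _ /=; lia. Qed.

Section NC.
Variable (S : pzRingType) (I : eqType).

Lemma prod_notin (l : seq I) (P : pred I) (G : I -> S) i0 : i0 \notin l ->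
  \prod_(i <- l | P i && (i != i0)) G i = \prod_(i <- l | P i) G i.
Proof.
elim: l => [|a l IH]; first by rewrite !big_nil.
rewrite in_cons negb_or => /andP [na nl]; rewrite !big_cons IH // eq_sym na andbT //.
Qed.

Lemma bigD1_comm (l : seq I) (P : pred I) (G : I -> S) i0 : uniq l -> i0 \in l -> P i0 ->
  (forall i, GRing.comm (G i0) (G i)) ->
  \prod_(i <- l | P i) G i = G i0 * \prod_(i <- l | P i && (i != i0)) G i.
Proof.
move=> + + Pi0 hc; elim: l => [//|a l IH] /= /andP [al ul].
rewrite in_cons big_cons [in RHS]big_cons.
have [ea|ne] := eqVneq i0 a.
  by move=> _; rewrite -ea Pi0 /= prod_notin // ea.
rewrite /= => il; rewrite IH // andbT.
by case: (P a) => //; rewrite !mulrA hc.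
Qed.

Lemma prod_mul_scal (l : seq I) (G : I -> S) i0 (x : S) (sc : S) : uniq l -> i0 \in l ->
  (forall i, GRing.comm (G i0) (G i)) -> (forall i, i != i0 -> GRing.comm x (G i)) ->
  G i0 * x = sc * G i0 -> GRing.comm sc x -> (forall i, GRing.comm sc (G i)) ->
  (\prod_(i <- l) G i) * x = sc * \prod_(i <- l) G i.
Proof.
move=> ul il hc hx hs hsx hsG.
rewrite (bigD1_comm (P := predT) (i0 := i0)) //= -mulrA.
have hq : GRing.comm x (\prod_(i <- l | i != i0) G i) by apply: commr_prod.
rewrite -hq mulrA hs -!mulrA; congr (_ * _).
Qed.

End NC.

Section Aux.
Variable (R : idomainType) (A : algType R) (n r : nat) (u : 'I_r -> R) (t : nat -> A).
Hypothesis hD : Delta u \is a GRing.unit.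

Lemma unit_diff (c c' : 'I_r) : c != c' -> (u c - u c') \is a GRing.unit.
Proof.
have key : forall a b : 'I_r, (b < a)%N -> (u a - u b) \is a GRing.unit.
  move=> a b ba; move: hD; rewrite /Delta => /unitr_prodP /(_ a (mem_index_enum _) isT).
  by move/unitr_prodP/(_ b (mem_index_enum _) ba).
move=> ne; case: (ltngtP c c') => h.
- by rewrite -opprB unitrN key.
- exact: key.
- by move: ne; rewrite (val_inj h) eqxx.
Qed.

Lemma u_inj : injective u.
Proof.
move=> a b e; apply/eqP; apply/negPn/negP => ne.
by move: (unit_diff ne); rewrite e subrr unitr0.
Qed.

Definition Lp (c : 'I_r) : {poly R} :=
  \prod_(c' < r | c' != c) ((u c - u c')^-1 *: ('X - (u c')%:P)).

Lemma Lp_val c c' : (Lp c).[u c'] = (c == c')%:R.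
Proof.
rewrite /Lp horner_prod; case: eqP => [<-|/eqP ne].
  by rewrite big1 // => d hd; rewrite hornerZ hornerXsubC mulVr // unit_diff // eq_sym.
rewrite (bigD1 c') 1?eq_sym //= hornerZ hornerXsubC subrr mulr0 mul0r //.
Qed.

Lemma size_Lp c : (size (Lp c) <= r)%N.
Proof.
apply: leq_trans (size_poly_prod_leq _ _) _.
have -> : #|[pred c' : 'I_r | c' != c]| = r.-1.
  by rewrite cardC1 card_ord.
have : (\sum_(c' < r | c' != c) size ((u c - u c')^-1 *: ('X - (u c')%:P)) <= \sum_(c' < r | c' != c) 2)%N.
  by apply: leq_sum => d _; apply: leq_trans (size_scale_leq _ _) _; rewrite size_XsubC.
rewrite sum_nat_const cardC1 card_ord => h.
by apply: arith1 h; apply: leq_ltn_trans (ltn_ord c).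
Qed.

Lemma interp (p : {poly R}) : (size p <= r)%N -> (forall c, p.[u c] = 0) -> p = 0.
Proof.
move=> sp h; apply/eqP; apply/negPn/negP => nz.
have := max_poly_roots nz (rs := map u (enum 'I_r)).
rewrite size_map size_enum_ord map_inj_uniq ?enum_uniq //; last exact: u_inj.
have -> : all (root p) [seq u i | i <- enum 'I_r].
  by apply/allP => x /mapP [c _ ->]; apply/rootP.
move=> /(_ isT isT) ; rewrite ltnNge sp //.
Qed.


Lemma F_eq (F : 'I_r -> {poly R}) : (forall c, (size (F c) <= r)%N) ->
  (forall c c', (F c).[u c'] = (c == c')%:R * Delta u) -> forall c, F c = Delta u *: Lp c.
Proof.
move=> hs hv c; apply/eqP; rewrite -subr_eq0; apply/eqP; apply: interp.
  apply: leq_trans (size_polyD _ _) _; rewrite geq_max hs size_polyN.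
  exact: leq_trans (size_scale_leq _ _) (size_Lp _).
by move=> c'; rewrite hornerD hornerN hornerZ hv Lp_val mulrC subrr.
Qed.

Lemma sum_Lp : (0 < r)%N -> \sum_c Lp c = 1.
Proof.
move=> r0; apply/eqP; rewrite -subr_eq0; apply/eqP; apply: interp.
  apply: leq_trans (size_polyD _ _) _; rewrite geq_max size_polyN size_poly1 r0 andbT.
  by apply: (big_ind (fun p : {poly R} => size p <= r)%N) => //;
    [rewrite size_poly0 | move=> x y hx hy; apply: leq_trans (size_polyD _ _) _; rewrite geq_max hx hy | move=> c _; exact: size_Lp].
move=> c'; rewrite hornerD hornerN horner_sum hornerC (bigD1 c') //= Lp_val eqxx big1 ?addr0 ?subrr //.
by move=> d hd; rewrite Lp_val (negbTE hd).
Qed.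

Definition E (i : nat) (c : 'I_r) : A :=
  \prod_(c' < r | c' != c) ((u c - u c')^-1 *: (t i - (u c')%:A)).

Lemma E_horner i c : E i c = horner_alg (t i) (Lp c).
Proof.
rewrite /E /Lp rmorph_prod; apply: eq_bigr => d _.
rewrite [RHS]linearZ /= rmorphB /= horner_algX horner_algC.
by rewrite mulr_algl.
Qed.

Lemma comm_horner (x y : A) p : GRing.comm y x -> GRing.comm y (horner_alg x p).
Proof.
move=> hxy; elim/poly_ind: p => [|p c IH]; first by rewrite rmorph0 /GRing.comm mul0r mulr0.
rewrite rmorphD rmorphM /= horner_algX horner_algC.
apply: commrD; first exact: commrM.
by rewrite /GRing.comm mulr_algl mulr_algr.
Qed.

Hypothesis htc : forall i j, (i < n)%N -> (j < n)%N -> t i * t j = t j * t i.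
Hypothesis hprod : forall i, (i < n)%N -> \prod_(c < r) (t i - (u c)%:A) = 0.

Lemma commE i j c : (i < n)%N -> (j < n)%N -> GRing.comm (t i) (E j c).
Proof. by move=> hi hj; rewrite E_horner; apply: comm_horner; apply: htc. Qed.

Lemma commEE i j c c' : (i < n)%N -> (j < n)%N -> GRing.comm (E i c) (E j c').
Proof.
move=> hi hj; rewrite [E j c']E_horner; apply: comm_horner.
exact/commr_sym/commE.
Qed.

Lemma E_t i c : (i < n)%N -> E i c * t i = (u c)%:A * E i c.
Proof.
move=> hi; apply/eqP; rewrite -subr_eq0; apply/eqP.
have -> : E i c * t i - (u c)%:A * E i c = horner_alg (t i) (Lp c * ('X - (u c)%:P)).
  by rewrite rmorphM rmorphB /= horner_algX horner_algC E_horner mulrBr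
    /GRing.comm mulr_algl mulr_algr.
have -> : Lp c * ('X - (u c)%:P) =
    (\prod_(c' < r | c' != c) (u c - u c')^-1) *: \prod_(c' < r) ('X - (u c')%:P).
  by rewrite /Lp scaler_prod [X in _ = _ *: X](bigD1 c) //= -scalerAl mulrC.
rewrite linearZ /= rmorph_prod /=.
rewrite (eq_bigr (fun c' => t i - (u c')%:A)); first by rewrite hprod // mulr0.
by move=> d _; rewrite rmorphB /= horner_algX horner_algC.
Qed.

Lemma E_sum i : (0 < r)%N -> \sum_c E i c = 1.
Proof.
move=> r0; rewrite (eq_bigr (fun c => horner_alg (t i) (Lp c))); last by move=> c _; rewrite E_horner.
by rewrite -rmorph_sum sum_Lp // rmorph1.
Qed.

Lemma F_horner (F : 'I_r -> {poly R}) i c : (forall c, (size (F c) <= r)%N) ->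
  (forall c c', (F c).[u c'] = (c == c')%:R * Delta u) ->
  horner_alg (t i) (F c) = Delta u *: E i c.
Proof.
move=> hs hv; rewrite (F_eq hs hv) linearZ /= E_horner.
by rewrite mulr_algl.
Qed.


Lemma Ksum (j j1 : 'I_n) a b : (0 < r)%N -> j != j1 ->
  \sum_(k : n.-tuple 'I_r | (tnth k j == a) && (tnth k j1 == b)) bk u t k = E j a * E j1 b.
Proof.
move=> r0 nj.
rewrite (reindex (fun f : {ffun 'I_n -> 'I_r} => [tuple f i | i < n])) /=; last first.
  exists (fun k => [ffun i => tnth k i]) => [f _|k _].
    by apply/ffunP => i; rewrite ffunE tnth_mktuple.
  by apply: eq_from_tnth => i; rewrite tnth_mktuple ffunE.
pose Q := fun (i : 'I_n) (c : 'I_r) => if i == j then c == a else if i == j1 then c == b else true.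
transitivity (\sum_(f in family Q) \prod_(i : 'I_n) E i (f i)).
  apply: eq_big => [f|f _].
    rewrite !tnth_mktuple; apply/andP/familyP => [[/eqP ea /eqP eb] i|hf].
      by rewrite unfold_in /Q; case: eqP => [->|_]; [rewrite ea|case: eqP => [->|//]; rewrite eb].
    by split; [have := hf j; rewrite unfold_in /Q eqxx | have := hf j1; rewrite unfold_in /Q eqxx eq_sym (negbTE nj)].
  by rewrite /bk; apply: eq_bigr => i _; rewrite tnth_mktuple.
rewrite -(@bigA_distr_big_dep A 0 1 *%R +%R _ _ Q (fun i c => E i c)).
pose H := fun i : 'I_n => if i == j then E j a else if i == j1 then E j1 b else 1.
rewrite (eq_bigr H); last first.
  move=> i _; rewrite /Q /H; case: eqP => [->|_]; first by rewrite big_pred1_eq.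
  case: eqP => [->|_]; first by rewrite big_pred1_eq.
  exact: E_sum.
have hc : forall i i', GRing.comm (H i) (H i').
  move=> i i'; rewrite /H.
  case: (i == j); case: (i == j1); case: (i' == j); case: (i' == j1);
    try exact: commr1; try exact: commr_sym (commr1 _); exact: commEE.
rewrite (bigD1_comm (P := predT) (i0 := j)) ?index_enum_uniq ?mem_index_enum //.
rewrite (bigD1_comm (i0 := j1)) ?index_enum_uniq ?mem_index_enum //=; last by rewrite eq_sym.
rewrite big1 ?mulr1; last by move=> i /andP [ij ij1]; rewrite /H (negbTE ij) (negbTE ij1).
by rewrite /H eqxx eq_sym (negbTE nj) eqxx.
Qed.


Lemma kvalE (k : n.-tuple 'I_r) (i : 'I_n) : kval k i = tnth k i.
Proof.
rewrite /kval (nth_map (tnth k i)) ?size_tuple ?ltn_ord //.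
by rewrite -tnth_nth.
Qed.

Lemma bk_t (k : n.-tuple 'I_r) (i0 : 'I_n) :
  bk u t k * t i0 = (u (tnth k i0))%:A * bk u t k.
Proof.
have -> : bk u t k = \prod_(i < n) E i (tnth k i) by [].
apply: prod_mul_scal; rewrite ?index_enum_uniq ?mem_index_enum //.
- by move=> i; apply: commEE.
- by move=> i _; apply: commE.
- exact: E_t.
- by rewrite /GRing.comm mulr_algl mulr_algr.
- by move=> i; rewrite /GRing.comm mulr_algl mulr_algr.
Qed.

Lemma bk_comm (k : n.-tuple 'I_r) i : (i < n)%N -> GRing.comm (t i) (bk u t k).
Proof. by move=> hi; apply: commr_prod => i' _; apply: commE. Qed.


Lemma BD (q : R) (F : 'I_r -> {poly R}) (j : nat) : (0 < r)%N -> (j.+1 < n)%N ->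
  (forall c, (size (F c) <= r)%N) ->
  (forall c c', (F c).[u c'] = (c == c')%:R * Delta u) ->
  \sum_(c1 < r) \sum_(c2 < r | (c1 < c2)%N)
      ((Delta u ^- 2 * (u c2 - u c1) * (q - q^-1)) *:
         (horner_alg (t j) (F c1) * horner_alg (t j.+1) (F c2)))
  = Bprime n q u t j j.+1 * (t j - t j.+1).
Proof.
move=> r0 hj1 hs hv.
pose jo : 'I_n := Ordinal (ltnW hj1); pose j1o : 'I_n := Ordinal hj1.
pose W := fun p : 'I_r * 'I_r => (u p.2 - u p.1) * (q - q^-1).
transitivity (\sum_(p : 'I_r * 'I_r | (p.1 < p.2)%N) W p *: (E j p.1 * E j.+1 p.2)).
  rewrite pair_big_dep /=; apply: eq_bigr => p _.
  rewrite !(F_horner _ _ hs hv) -scalerAl -scalerAr !scalerA; congr (_ *: _).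
  have hDD : (Delta u ^+ 2)^-1 * (Delta u * Delta u) = 1 by rewrite -expr2 mulVr // unitrX.
  rewrite (_ : _ * _ = ((Delta u ^+ 2)^-1 * (Delta u * Delta u)) * W p); first by rewrite hDD mul1r.
  rewrite /W; ring.
rewrite /Bprime -scalerAl mulr_suml.
rewrite (eq_bigr (fun k => (u (tnth k jo) - u (tnth k j1o)) *: bk u t k)); last first.
  move=> k _; rewrite mulrBr (bk_t k jo) (bk_t k j1o) !mulr_algl.
  by rewrite scalerBl.
rewrite (eq_bigl (fun k : n.-tuple 'I_r => (tnth k jo < tnth k j1o)%N)); last first.
  by move=> k; rewrite (kvalE k jo) (kvalE k j1o).
rewrite (partition_big (fun k : n.-tuple 'I_r => (tnth k jo, tnth k j1o))
   [pred p : 'I_r * 'I_r | (p.1 < p.2)%N]) //=.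
rewrite scaler_sumr; apply: eq_bigr => p hp.
rewrite -(Ksum (j:=jo) (j1:=j1o)) //; last by rewrite -(inj_eq val_inj) /= ltn_eqF.
rewrite !scaler_sumr; apply: eq_big => k.
  case: p hp => a b /= hab; rewrite xpair_eqE.
  by case: eqP => [->|_]; case: eqP => [->|_]; rewrite ?andbF ?andbT //=.
move=> /andP [/eqP e1 /eqP e2]; rewrite scalerA e1 e2; congr (_ *: _).
rewrite /W /=; ring.
Qed.


Lemma B_comm q j i : (i < n)%N ->
  Bprime n q u t j j.+1 * t i = t i * Bprime n q u t j j.+1.
Proof.
move=> hi; rewrite /Bprime -scalerAl -scalerAr mulr_suml mulr_sumr; congr (_ *: _).
by apply: eq_bigr => k _; rewrite (bk_comm k hi).
Qed.

End Aux.

Lemma g_powX (S : pzRingType) (g x y : S) k : g * x = y * g -> g * x ^+ k = y ^+ k * g.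
Proof.
move=> h; elim: k => [|k IH]; first by rewrite !expr0 mulr1 mul1r.
by rewrite !exprS mulrA h -mulrA IH mulrA.
Qed.

Lemma g_mmap (R : idomainType) (A : algType R) (n : nat) (g : A) (h h' : 'I_n -> A)
  (f : {mpoly R[n]}) : (forall i, g * h i = h' i * g) ->
  g * mpoly.mmap (in_alg A) h f = mpoly.mmap (in_alg A) h' f * g.
Proof.
move=> hg; rewrite /mpoly.mmap mulr_sumr mulr_suml; apply: eq_bigr => m _.
rewrite mulrA (_ : g * in_alg A _ = in_alg A (f@_m) * g); last by rewrite /= mulr_algl mulr_algr.
rewrite -!mulrA; congr (_ * _).
rewrite /mpoly.mmap1.
apply: (big_rec2 (fun y1 y2 => g * y1 = y2 * g)); first by rewrite mul1r mulr1.
move=> i y1 y2 _ IH.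
by rewrite mulrA (g_powX _ (hg i)) -mulrA IH mulrA.
Qed.

Theorem proposition3p3 (R : idomainType) (A : algType R) (n r : nat)
  (q : R) (u : 'I_r -> R) (F : 'I_r -> {poly R}) (t T : nat -> A) :
  (2 <= n)%N -> (1 <= r)%N ->
  q \is a GRing.unit -> Delta u \is a GRing.unit ->
  (forall c, (size (F c) <= r)%N) ->
  (forall c c', (F c).[u c'] = (c == c')%:R * Delta u) ->
  AK_relations n q u F t T ->
  (forall i j, (i < n)%N -> (j < n.-1)%N ->
     gen_g n q u t T j * t i = t (swapn j i) * gen_g n q u t T j) /\
  (forall (f : {mpoly R[n]}) j, (j < n.-1)%N ->
     gen_g n q u t T j * evalA t f = evalA (fun i => t (swapn j i)) f * gen_g n q u t T j).
Proof.
move=> n2 r1 qU DU hs hv hrel.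
case: hrel => hT1 [hprod [hbr [hTT [htc [hTt [hA hB]]]]]].
have part1 : forall i j, (i < n)%N -> (j < n.-1)%N ->
     gen_g n q u t T j * t i = t (swapn j i) * gen_g n q u t T j.
  move=> i j hi hj.
  have hj1 : (j.+1 < n)%N by move: hj n2; clear; case: n => // m; lia.
  have hjn : (j < n)%N by apply: ltnW.
  have bd := BD DU htc hprod q r1 hj1 hs hv.
  have Bc := B_comm u htc q j.
  rewrite /gen_g /swapn mulrDl mulrDr.
  case: eqP => [->|/eqP nij].
    rewrite hB //= bd mulrBr (Bc j.+1 hj1) opprB -addrA subrK.
    by [].
  case: eqP => [->|/eqP nij1].
    by rewrite hA //= bd mulrBr -addrA subrK (Bc j hjn).
  by rewrite hTt // Bc.
split => // f j hj.
rewrite /evalA; apply: (@g_mmap R A n) => i.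
exact: part1 (ltn_ord i) hj.
Qed.
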